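(* Let $V$ be a finite set with $n=|V|$ elements and let $p_v\in[1/n^2,1]$ for each $v\in V$. Define $p=\frac1n\min_{v\in V}p_v$, and for each $v\in V$ define $\bar p_v=\min\{(1+\frac1n)p_v,1\}$, $t_v=\lceil p_v/p\rceil$ and $q_v=1-(1-p)^{t_v}$. Then for every $v\in V$, $$p_v\left(1-\tfrac1e\right)\le q_v\le \bar p_v\le p_v\left(1+\tfrac1n\right).$$ *)

(* Defs.v *)
From HB Require Import structures.
From mathcomp Require Import all_boot all_order all_algebra.
From mathcomp Require Import all_classical all_reals all_analysis.
Set Implicit Arguments. Unset Strict Implicit. Unset Printing Implicit Defensive.
Import Order.TTheory GRing.Theory Num.Theory.
Local Open Scope ring_scope.

(* min_{w in V} pv w, computed as a fold of Order.min starting from the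
   value pv v0 at some element v0 of V (so it is the genuine minimum and
   does not depend on v0). *)
Definition minp (V : finType) (R : realType) (pv : V -> R) (v0 : V) : R :=
  \big[Order.min/pv v0]_(w : V) pv w.

Definition pp (V : finType) (R : realType) (pv : V -> R) (v0 : V) : R :=
  (#|V|%:R)^-1 * minp pv v0.

Definition pbar (V : finType) (R : realType) (pv : V -> R) (v : V) : R :=
  Order.min ((1 + (#|V|%:R)^-1) * pv v) 1.

Definition tv (V : finType) (R : realType) (pv : V -> R) (v : V) : int :=
  Num.ceil (pv v / pp pv v).

Definition qv (V : finType) (R : realType) (pv : V -> R) (v : V) : R :=
  1 - (1 - pp pv v) ^ (tv pv v).

(* Main.v *)
Require Import Defs.
From HB Require Import structures.
From mathcomp Require Import all_boot all_order all_algebra.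
From mathcomp Require Import all_classical all_reals all_analysis.
Import Order.TTheory GRing.Theory Num.Theory.
From mathcomp Require Import lra.
Local Open Scope ring_scope.
Lemma key (R : realType) (x : R) : 0 <= x <= 1 -> expR (- x) <= 1 - x * (1 - (expR 1)^-1).
Proof.
move=> /andP[x0 x1].
unshelve epose (t := (@Itv.Def _ _ _ x _) : {i01 R}).
  by rewrite /Itv.spec /= /Itv.num_sem /= num_real in_itv /= x0 x1.
have := convex_expR t (-1) 0.
rewrite !convRE /= expR0 mulr1 mulrN1 mulr0 addr0 (expRN 1) => h.
apply: le_trans h _. rewrite /unstable.onem. lra.
Qed.

Lemma bern (R : realType) (y : R) (k : nat) : 0 <= y <= 1 -> 1 - k%:R * y <= (1 - y) ^+ k.
Proof.
move=> /andP[y0 y1]; elim: k => [|k IH]; first by rewrite expr0 mulr0n mul0r subr0.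
rewrite exprS -natr1.
have h0 : 0 <= (1 - y) ^+ k by apply: exprn_ge0; lra.
have k0 : 0 <= k%:R :> R by [].
have : 0 <= (1 - y) * ((1 - y) ^+ k - (1 - k%:R * y)) by apply: mulr_ge0; lra.
nra.
Qed.

Theorem lemma1 (R : realType) (V : finType) (pv : V -> R)
  (hp : forall v, ((#|V|%:R) ^+ 2)^-1 <= pv v <= 1) :
  forall v : V,
    pv v * (1 - (expR 1)^-1) <= qv pv v /\
    qv pv v <= pbar pv v /\
    pbar pv v <= pv v * (1 + (#|V|%:R)^-1).
Proof.
move=> v.
have hn : (0 < #|V|)%N by apply/card_gt0P; exists v.
set n : R := #|V|%:R.
have n1 : 1 <= n by rewrite /n ler1n.
have n0 : 0 < n by lra.
have ni0 : 0 < n^-1 by rewrite invr_gt0.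
have ni1 : n^-1 <= 1 by rewrite invf_le1.
have ln2 : 0 < (n ^+ 2)^-1 by rewrite invr_gt0 exprn_gt0.
set m := minp pv v.
have m_lo : (n ^+ 2)^-1 <= m.
  rewrite /m /minp; apply: (big_ind (fun y => (n ^+ 2)^-1 <= y)).
  - by case/andP: (hp v).
  - by move=> x y hx hy; rewrite le_min hx hy.
  - by move=> w _; case/andP: (hp w).
have m_hi : m <= pv v.
  rewrite /m /minp (bigD1 v) //= ge_min lexx //.
have [pv_lo pv_hi] := andP (hp v).
have m0 : 0 < m by lra.
have ppE : pp pv v = n^-1 * m by [].
set p := n^-1 * m.
have p0 : 0 < p by rewrite mulr_gt0.
have p1 : p <= m by rewrite /p ler_piMl // ltW.
have pvn : p <= pv v / n.
  by rewrite /p mulrC ler_pM2r.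
set r := pv v / p.
have rp : r * p = pv v by rewrite /r divfK // gt_eqF.
have r1 : 1 <= r by rewrite /r ler_pdivlMr //; lra.
have tvE : tv pv v = Num.ceil r by [].
have [c1 c2] := andP (ceil_itv r).
have ct0 : 0 < Num.ceil r by rewrite ceil_gt0; lra.
have [k hk] : exists k : nat, Num.ceil r = k%:Z.
  by exists `|Num.ceil r|%N; rewrite gez0_abs // ltW.
rewrite hk in c1 c2.
rewrite -[((k%:Z)%:~R : R)]/(k%:R) in c2.
have c1' : k%:R - 1 < r.
  by move: c1; rewrite intrD /= -[((k%:Z)%:~R : R)]/(k%:R).
have qE : qv pv v = 1 - (1 - p) ^+ k.
  by rewrite /qv tvE hk ppE.
have kp_lo : pv v <= k%:R * p by rewrite -rp ler_pM2r.
have kp_hi : k%:R * p <= pv v + p by nra.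
have pw0 : 0 <= (1 - p) ^+ k by apply: exprn_ge0; lra.
have bb := @bern R p k ltac:(apply/andP; split; lra).
have q_up1 : qv pv v <= 1 by rewrite qE; lra.
have q_up2 : qv pv v <= (1 + n^-1) * pv v.
  rewrite qE. have : p <= n^-1 * pv v by rewrite mulrC. nra.
split; last split.
- have e1 : (1 - p) ^+ k <= expR (- p) ^+ k.
    apply: lerXn2r; rewrite ?nnegrE ?expR_ge0 //; first lra.
    by have := expR_ge1Dx (- p); lra.
  rewrite -expRM_natl in e1.
  have e2 : expR (k%:R * - p) <= expR (- pv v) by rewrite ler_expR; nra.
  have := @key R (pv v) ltac:(apply/andP; split; lra).
  rewrite qE; nra.
- by rewrite /pbar le_min q_up1 q_up2.
- by rewrite /pbar ge_min mulrC lexx.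
Qed.
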